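(* In the SLAR setting, let $(w^{(t)})_{t\ge0}$ be the sequence produced by adversarial training. Let $x_i$ be a non-robust feature. Then for all $t>0$: if $w_i^{(t)}>0$ then $w_i^{(t+1)}\le 0$, and if $w_i^{(t)}<0$ then $w_i^{(t+1)}\ge0$.
   Context: SLAR setting: $(x,y)$ is drawn from a distribution $\mathcal D$ on $\mathbb R^d\times\{-1,+1\}$, $x=(x_1,\dots,x_d)$ with finite second moments, such that (A1) for each $i$ there is a constant $\mu_i$ with $\mathbb E[x_i\mid y]=y\mu_i$ for $y\in\{-1,1\}$, and (A2) the coordinates $x_1,\dots,x_d$ are mutually independent conditionally on $y$. Fix $\lambda>0$ and a perturbation budget $\varepsilon>0$; $\mathcal B(\varepsilon)=\{a\in\mathbb R^d:\|a\|_\infty\le\varepsilon\}$. A perturbation function is a measurable map $\delta$ assigning to each $(x,y)$ a vector $\delta(x,y)\in\mathcal B(\varepsilon)$. For a perturbation function $\delta$ and $w\in\mathbb R^d$ let $U(\delta,w)=\mathbb E_{(x,y)\sim\mathcal D}[\max(0,1-yw^\top(x+\delta(x,y)))]+\frac{\lambda}{2}\|w\|_2^2$. A feature $x_i$ is non-robust if $|\mu_i|\le\varepsilon$, and robust otherwise. $\operatorname{sign}$ is coordinatewise with $\operatorname{sign}(0)=0$. Adversarial training (AT): from an arbitrary $w^{(0)}\in\mathbb R^d$, for $t\ge1$ set $\delta^{(t)}(x,y)=-y\varepsilon\operatorname{sign}(w^{(t-1)})$ and $w^{(t)}=\arg\min_{w\in\mathbb R^d}U(\delta^{(t)},w)$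 (this minimizer is unique). *)

(* Defs.v *)
From HB Require Import structures.
From mathcomp Require Import all_boot all_order all_algebra.
From mathcomp Require Import all_classical all_reals all_analysis.
Set Implicit Arguments. Unset Strict Implicit. Unset Printing Implicit Defensive.
Import Order.TTheory GRing.Theory Num.Theory.
Import numFieldNormedType.Exports.
Local Open Scope classical_set_scope.
Local Open Scope ring_scope.

Section SLAR.
Context {R : realType} {d : measure_display} {T : measurableType d}.
Variable (P : probability T R) (n : nat).
Variables (X : 'I_n -> T -> R) (Y : T -> R).

Definition xvec (t : T) : 'rV[R]_n := \row_i X i t.

Definition dotv (w x : 'rV[R]_n) : R := \sum_(i < n) w 0 i * x 0 i.

Definition hinge (z : R) : R := Num.max 0 z.

Definition Yeq (c : R) : set T := [set t | Y t = c].

Definition condP (c : R) (A : set T) : R :=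
  fine (P (Yeq c `&` A)) / fine (P (Yeq c)).

Definition SLAR (mu : 'I_n -> R) : Prop :=
  [/\ (forall i, measurable_fun setT (X i)) /\ measurable_fun setT Y,
      (forall t, Y t = 1 \/ Y t = -1),
      (forall i, integrable P setT (fun t => ((X i t) ^+ 2)%:E)),
      (* (A1)  E[x_i | y] = y mu_i, i.e. E[x_i 1_{y=c}] = c mu_i P(y=c) *)
      (forall i (c : R), (c = 1 \/ c = -1) ->
         ((\int[P]_(t in Yeq c) (X i t)%:E)%E = ((c * mu i)%:E * P (Yeq c))%E))
    & (* (A2) coordinates mutually independent conditionally on y *)
      (forall (c : R) (B : 'I_n -> set R), (c = 1 \/ c = -1) ->
         (0 < P (Yeq c))%E -> (forall i, measurable (B i)) ->
         condP c (\bigcap_(i in [set: 'I_n]) (X i @^-1` B i))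
         = \prod_(i < n) condP c (X i @^-1` B i))].

Definition U (lam : R) (delta : 'rV[R]_n -> R -> 'rV[R]_n) (w : 'rV[R]_n)
  : \bar R :=
  ((\int[P]_t (hinge (1 - Y t * dotv w (xvec t + delta (xvec t) (Y t))))%:E)%E
   + (lam / 2 * \sum_(i < n) w 0 i ^+ 2)%:E)%E.

(* coordinatewise sign with sign(0) = 0 *)
Definition signv (w : 'rV[R]_n) : 'rV[R]_n := map_mx Num.sg w.

Definition AT_delta (eps : R) (wprev : 'rV[R]_n) : 'rV[R]_n -> R -> 'rV[R]_n :=
  fun _ y => (- (y * eps)) *: signv wprev.

Definition is_AT_sequence (lam eps : R) (w : nat -> 'rV[R]_n) : Prop :=
  forall t, (0 < t)%N -> forall v : 'rV[R]_n,
    (U lam (AT_delta eps (w t.-1)) (w t) <= U lam (AT_delta eps (w t.-1)) v)%E.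

End SLAR.

(* Main.v *)
Require Import Defs.
From HB Require Import structures.
From mathcomp Require Import all_boot all_order all_algebra.
From mathcomp Require Import all_classical all_reals all_analysis.
From mathcomp Require Import measurable_realfun.
From mathcomp Require Import ring lra.
Import Order.TTheory GRing.Theory Num.Theory.
Local Open Scope classical_set_scope.
Local Open Scope ring_scope.

Section Push.
Context {R : realType} {d : measure_display} {T : measurableType d}.
Variables (P : probability T R).

Lemma restr_int (S : set T) (mS : measurable S) (h : T -> \bar R) :
  measurable_fun setT h ->
  (\int[P]_(x in S) h x = \int[mrestr P mS]_(x in setT) h x)%E.
Proof.
move=> mh.
rewrite -(setUv S) integral_setU//; last 3 first.
- exact: measurableC.
- by rewrite setUv.
- by rewrite disj_set2E setICr.
rewrite [X in (_ + X)%E]null_set_integral; last 3 first.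
- exact: measurableC.
- exact: measurable_funTS.
- by rewrite /= /mrestr setICl measure0.
rewrite adde0; apply: eq_measure_integral => A mA AS.
by rewrite /= /mrestr setIidl.
Qed.

Variables (f : T -> R) (mf : measurable_fun setT f).
Variables (S S2 : set T) (mS : measurable S) (mS2 : measurable S2).
Variable k : {nonneg R}.
Hypothesis H : forall B, measurable B -> P (f @^-1` B `&` S) = (k%:num%:E * P (f @^-1` B `&` S2))%E.
Lemma push_scale (g : R -> \bar R) : measurable_fun setT g -> (forall x, 0 <= g x)%E ->
  (\int[P]_(x in S) g (f x) = k%:num%:E * \int[P]_(x in S2) g (f x))%E.
Proof.
move=> mg g0.
have mgf : measurable_fun setT (g \o f) by exact: measurableT_comp.
rewrite (restr_int _ mS) // (restr_int _ mS2)//.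
pose m1 : measure R R := ltac:(refine (pushforward (mrestr P mS) f : measure R R); exact: mf).
pose m2 : measure R R := ltac:(refine (pushforward (mrestr P mS2) f : measure R R); exact: mf).
have e1 := @ge0_integral_pushforward _ _ _ _ _ f mf (mrestr P mS) setT g measurableT mg (fun y _ => g0 y).
have e2 := @ge0_integral_pushforward _ _ _ _ _ f mf (mrestr P mS2) setT g measurableT mg (fun y _ => g0 y).
rewrite preimage_setT in e1 e2.
rewrite -e1 -e2.
rewrite -[LHS]/(\int[m1]_(y in setT) g y)%E.
rewrite -[in RHS]/(\int[m2]_(y in setT) g y)%E.
rewrite -ge0_integral_mscale//.
apply: eq_measure_integral => A mA _.
exact: H.
Qed.
End Push.

Section Part1.
Context {R : realType} {d : measure_display} {T : measurableType d}.
Variables (P : probability T R) (n : nat) (X : 'I_n -> T -> R) (Y : T -> R).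
Hypothesis mX : forall i, measurable_fun setT (X i).
Hypothesis mY : measurable_fun setT Y.
Hypothesis indep : forall (c : R) (B : 'I_n -> set R), (c = 1 \/ c = -1) ->
         (0 < P (Yeq Y c))%E -> (forall i, measurable (B i)) ->
         condP P Y c (\bigcap_(i in [set: 'I_n]) (X i @^-1` B i))
         = \prod_(i < n) condP P Y c (X i @^-1` B i).

Lemma mYeq c : measurable (Yeq Y c).
Proof.
have := @mY measurableT _ (measurable_set1 c); rewrite setTI.
by congr measurable; apply/seteqP; split => t /=.
Qed.

Lemma mpre j B : measurable B -> measurable (X j @^-1` B).
Proof. by move=> mB; have := @mX j measurableT _ mB; rewrite setTI. Qed.

Lemma Pfin {A : set T} : measurable A -> P A = (fine (P A))%:E.
Proof. by move=> mA; rewrite fineK// fin_num_measure. Qed.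

Lemma P_ge0 A : (0 <= fine (P A))%R.
Proof. by apply: fine_ge0; exact: measure_ge0. Qed.

Definition G0 i : set (set T) := [set A | exists B : 'I_n -> set R,
  [/\ forall j, measurable (B j), B i = setT &
      A = \bigcap_(j in [set: 'I_n]) (X j @^-1` B j)]].

Lemma measG0 {i A} : G0 i A -> measurable A.
Proof.
move=> [B [mB _ ->]]; apply: fin_bigcap_measurable; first exact: finite_finset.
by move=> j _; exact: mpre.
Qed.

Lemma G0I i : setI_closed (G0 i).
Proof.
move=> _ _ [B [mB Bi ->]] [B' [mB' Bi' ->]].
exists (fun j => B j `&` B' j); split.
- by move=> j; exact: measurableI.
- by rewrite Bi Bi' setTI.
- apply/seteqP; split => t /=.
  + by move=> [h1 h2] j _; split; [exact: h1|exact: h2].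
  + by move=> h; split => j _; have [] := h j I.
Qed.

Definition Phi c i B A :=
  P (Yeq Y c `&` (A `&` X i @^-1` B)) =
  ((condP P Y c (X i @^-1` B))%:E * P (Yeq Y c `&` A))%E.

Lemma Phi_p0 c i B A : measurable B -> measurable A -> P (Yeq Y c) = 0%E ->
  Phi c i B A.
Proof.
move=> mB mA p0; rewrite /Phi.
have h S : measurable S -> P (Yeq Y c `&` S) = 0%E.
  move=> mS; apply/eqP; rewrite eq_le measure_ge0 andbT -p0.
  apply: le_measure; rewrite ?inE//.
  - by apply: measurableI => //; exact: mYeq.
  - exact: mYeq.
rewrite h; last by apply: measurableI => //; exact: mpre.
by rewrite h// mule0.
Qed.

Lemma PhiT c i B : measurable B -> Phi c i B setT.
Proof.
move=> mB; have [p0|pn0] := eqVneq (P (Yeq Y c)) 0%E.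
  by apply: Phi_p0.
rewrite /Phi setIT setTI /condP.
have mE : measurable (Yeq Y c `&` X i @^-1` B).
  by apply: measurableI; [exact: mYeq|exact: mpre].
have fp0 : fine (P (Yeq Y c)) != 0.
  by apply: contra pn0 => /eqP f0; rewrite (Pfin (mYeq c)) f0.
rewrite (Pfin mE) [X in (_ * X)%E](Pfin (mYeq c)) -EFinM; congr EFin.
by rewrite -mulrA mulVf ?mulr1.
Qed.


Lemma condP_mul c S : measurable S -> P (Yeq Y c) != 0%E ->
  P (Yeq Y c `&` S) = (condP P Y c S * fine (P (Yeq Y c)))%:E.
Proof.
move=> mS pn0.
have fp0 : fine (P (Yeq Y c)) != 0.
  by apply: contra pn0 => /eqP f0; rewrite (Pfin (mYeq c)) f0.
rewrite /condP -mulrA mulVf ?mulr1// -Pfin//.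
by apply: measurableI => //; exact: mYeq.
Qed.

Lemma Phi_G0 c i B A : (c = 1 \/ c = -1) -> measurable B -> G0 i A -> Phi c i B A.
Proof.
move=> hc mB GA; have mA := measG0 GA.
have [p0|pn0] := eqVneq (P (Yeq Y c)) 0%E; first exact: Phi_p0.
have ppos : (0 < P (Yeq Y c))%E by rewrite lt0e pn0 measure_ge0.
move: GA => [Bs [mBs Bsi defA]].
pose B' j := if j == i then B else Bs j.
have mB' j : measurable (B' j) by rewrite /B'; case: ifP.
have eA : A `&` X i @^-1` B = \bigcap_(j in [set: 'I_n]) (X j @^-1` B' j).
  rewrite defA; apply/seteqP; split => t /=.
  - move=> [h1 h2] j _; rewrite /B'; case: eqP => [->//|_]; exact: h1.
  - move=> h; split.
    + move=> j _; have := h j I; rewrite /B'; case: eqP => [->|//].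
      by rewrite Bsi.
    + by have := h i I; rewrite /B' eqxx.
have c1 := indep _ _ hc ppos mB'.
have c2 := indep _ _ hc ppos mBs.
rewrite -eA in c1; rewrite -defA in c2.
rewrite (bigD1 i)//= {1}/B' eqxx in c1.
rewrite (bigD1 i)//= Bsi preimage_setT in c2.
have e1 : condP P Y c setT = 1.
  have fp0 : fine (P (Yeq Y c)) != 0.
    by apply: contra pn0 => /eqP f0; rewrite (Pfin (mYeq c)) f0.
  by rewrite /condP setIT mulfV.
rewrite e1 mul1r in c2.
have e3 : \prod_(j < n | j != i) condP P Y c (X j @^-1` B' j) =
          \prod_(j < n | j != i) condP P Y c (X j @^-1` Bs j).
  by apply: eq_bigr => j /negbTE ji; rewrite /B' ji.
rewrite e3 -c2 in c1.
have mE : measurable (A `&` X i @^-1` B) by apply: measurableI => //; exact: mpre.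
rewrite /Phi (condP_mul _ _ mE pn0) (condP_mul _ _ mA pn0) c1 -EFinM.
by rewrite /condP !mulrA.
Qed.


Lemma mYI c S : measurable S -> measurable (Yeq Y c `&` S).
Proof. by move=> mS; apply: measurableI => //; exact: mYeq. Qed.

Lemma Phi_C c i B A : measurable B -> measurable A -> Phi c i B A ->
  Phi c i B (~` A).
Proof.
move=> mB mA hA; have hT := PhiT c i _ mB; move: hA hT; rewrite /Phi.
have mE := mpre i _ mB.
have mAE : measurable (A `&` X i @^-1` B) by exact: measurableI.
have mCE : measurable (~` A `&` X i @^-1` B) by apply: measurableI => //; exact: measurableC.
have mC : measurable (~` A) by exact: measurableC.
have hU1 : P (Yeq Y c `&` (setT `&` X i @^-1` B)) =
  (P (Yeq Y c `&` (A `&` X i @^-1` B)) + P (Yeq Y c `&` (~` A `&` X i @^-1` B)))%E.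
  rewrite -measureU; [|exact: mYI|exact: mYI|].
  - congr (P _); apply/seteqP; split => t /=.
    + by move=> [? [_ ?]]; have [] := pselect (A t); [left|right].
    + by move=> [] [? [? ?]].
  - by apply/seteqP; split => t //= [[_ [? _]] [_ [? _]]].
have hU2 : P (Yeq Y c `&` setT) =
  (P (Yeq Y c `&` A) + P (Yeq Y c `&` ~` A))%E.
  rewrite -measureU; [|exact: mYI|exact: mYI|].
  - congr (P _); apply/seteqP; split => t /=.
    + by move=> [? _]; have [] := pselect (A t); [left|right].
    + by move=> [] [].
  - by apply/seteqP; split => t //= [[_ ?] [_ ?]].
move: hU1 hU2.
rewrite (Pfin (mYI _ _ mAE)) (Pfin (mYI _ _ mCE)) (Pfin (mYI _ _ mA)) (Pfin (mYI _ _ mC)).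
rewrite (Pfin (mYI _ _ (measurableI _ _ measurableT mE))) (Pfin (mYI _ _ measurableT)).
rewrite -!EFinD -!EFinM.
move=> [] h1 [] h2 [] h3 [] h4; congr EFin.
set r := condP _ _ _ _ in h3 h4 *.
have -> : fine (P (Yeq Y c `&` (~` A `&` X i @^-1` B))) =
  fine (P (Yeq Y c `&` ([set: T] `&` X i @^-1` B))) - fine (P (Yeq Y c `&` (A `&` X i @^-1` B))).
  by rewrite h1; ring.
have -> : fine (P (Yeq Y c `&` ~` A)) =
  fine (P (Yeq Y c `&` [set: T])) - fine (P (Yeq Y c `&` A)).
  by rewrite h2; ring.
by rewrite h3 h4; ring.
Qed.

Lemma Phi_U c i B (F : (set T)^nat) : measurable B -> trivIset setT F ->
  (forall k, measurable (F k) /\ Phi c i B (F k)) ->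
  Phi c i B (\bigcup_k F k).
Proof.
move=> mB tF hF; rewrite /Phi.
have mE := mpre i _ mB.
have e1 : Yeq Y c `&` (\bigcup_k F k `&` X i @^-1` B) =
  \bigcup_k (Yeq Y c `&` (F k `&` X i @^-1` B)).
  apply/seteqP; split => t /=.
  - by move=> [? [[k _ ?] ?]]; exists k.
  - by move=> [k _ [? [? ?]]]; split => //; split => //; exists k.
have e2 : Yeq Y c `&` \bigcup_k F k = \bigcup_k (Yeq Y c `&` F k).
  apply/seteqP; split => t /=.
  - by move=> [? [k _ ?]]; exists k.
  - by move=> [k _ [? ?]]; split => //; exists k.
rewrite e1 e2 !measure_bigcup//=.
- rewrite -nneseriesZl; last by move=> k _; exact: measure_ge0.
  by apply: eq_eseriesr => k _; have [_ ->] := hF k.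
- by move=> k _; apply: mYI; have [] := hF k.
- exact: trivIset_setIl.
- by move=> k _; apply: mYI; apply: measurableI => //; have [] := hF k.
- have : trivIset setT (fun k => F k `&` X i @^-1` B) by exact: trivIset_setIr.
  exact: trivIset_setIl.
Qed.

Lemma Phi_sigma c i B A : (c = 1 \/ c = -1) -> measurable B ->
  <<s G0 i >> A -> measurable A /\ Phi c i B A.
Proof.
move=> hc mB; apply: (@lambda_system_subset _ (G0 i) (G0I i) setT
  [set A | measurable A /\ Phi c i B A]) => //.
- apply/dynkin_lambda_system; split.
  + by split => //; exact: PhiT.
  + by move=> A0 [mA hA]; split; [exact: measurableC|exact: Phi_C].
  + move=> F tF hF; split; first by apply: bigcup_measurable => k _; have [] := hF k.
    exact: Phi_U.
- by move=> A0 GA; split; [exact: measG0 GA|exact: Phi_G0].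
Qed.


Lemma mEFin : measurable_fun setT (@EFin R).
Proof. by apply/(measurable_EFinP _ (fun x : R => x)). Qed.

Lemma int_X c i A (muc : R) : (c = 1 \/ c = -1) ->
  P.-integrable setT (fun t => (X i t)%:E) ->
  (\int[P]_(t in Yeq Y c) (X i t)%:E = (muc%:E * P (Yeq Y c)))%E ->
  <<s G0 i >> A ->
  (\int[P]_(t in Yeq Y c `&` A) (X i t)%:E = (muc%:E * P (Yeq Y c `&` A)))%E.
Proof.
move=> hc hint hA1 sA.
have [mA _] := Phi_sigma c i setT _ hc measurableT sA.
have mS1 := mYI c _ mA.
have mS2 := mYeq c.
have mXE : measurable_fun setT (fun t => (X i t)%:E) by exact/measurable_EFinP.
have [p0|pn0] := eqVneq (P (Yeq Y c)) 0%E.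
  have PS1 : P (Yeq Y c `&` A) = 0%E.
    apply/eqP; rewrite eq_le measure_ge0 andbT -p0.
    by apply: le_measure; rewrite ?inE//; exact: subIsetl.
  by rewrite PS1 mule0 null_set_integral//; exact: measurable_funTS.
have fp0 : fine (P (Yeq Y c)) != 0.
  by apply: contra pn0 => /eqP f0; rewrite (Pfin (mYeq c)) f0.
have fpos : (0 < fine (P (Yeq Y c)))%R by rewrite lt0r fp0 P_ge0.
pose k := fine (P (Yeq Y c `&` A)) / fine (P (Yeq Y c)).
have k0 : (0 <= k)%R by rewrite /k divr_ge0// P_ge0.
pose kk := NngNum k0.
have H : forall B, measurable B -> P (X i @^-1` B `&` (Yeq Y c `&` A)) =
    ((kk%:num)%:E * P (X i @^-1` B `&` Yeq Y c))%E.
  move=> B mB; have [_ hP] := Phi_sigma c i B _ hc mB sA.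
  have -> : X i @^-1` B `&` (Yeq Y c `&` A) = Yeq Y c `&` (A `&` X i @^-1` B).
    by apply/seteqP; split => t /= [] ? [] ? ?.
  have -> : X i @^-1` B `&` Yeq Y c = Yeq Y c `&` X i @^-1` B.
    by rewrite setIC.
  have mE := mpre i _ mB.
  rewrite hP (Pfin (mYI _ _ mA)) (Pfin (mYI _ _ mE)) -!EFinM /=; congr EFin.
  rewrite /condP /k; ring.
have mpos : measurable_fun setT (funepos (@EFin R)) by exact: measurable_funepos mEFin.
have mneg : measurable_fun setT (funeneg (@EFin R)) by exact: measurable_funeneg mEFin.
have ep := push_scale P (X i) (mX i) _ _ mS1 mS2 kk H _ mpos (funepos_ge0 _).
have en := push_scale P (X i) (mX i) _ _ mS1 mS2 kk H _ mneg (funeneg_ge0 _).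
have f1 : forall S : set T, (\int[P]_(x in S) (funepos (fun t => (X i t)%:E) x) =
    \int[P]_(x in S) ((funepos (@EFin R)) (X i x)))%E by move=> S; apply: eq_integral => x _; rewrite ?funeposE ?funenegE.
have f2 : forall S : set T, (\int[P]_(x in S) (funeneg (fun t => (X i t)%:E) x) =
    \int[P]_(x in S) ((funeneg (@EFin R)) (X i x)))%E by move=> S; apply: eq_integral => x _; rewrite ?funeposE ?funenegE.
rewrite integralE f1 f2 ep en -muleBr//; last first.
  apply: fin_num_adde_defl; rewrite fin_numN -f2.
  exact: (integrable_neg_fin_num _ (integrableS measurableT mS2 (subsetT _) hint)).
rewrite -f1 -f2 -integralE.
rewrite hA1 (Pfin mS2) (Pfin mS1) -!EFinM; congr EFin.
by rewrite /k mulrCA -mulrA mulVf ?mulr1.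
Qed.


Lemma sigma_lin i (a b : 'I_n -> R) (C D : R) : a i = 0 ->
  <<s G0 i >> [set t | 0 < C - D * \sum_(j < n) a j * (X j t - b j)].
Proof.
move=> ai0.
pose T' := g_sigma_algebraType (G0 i).
have mXj j : j != i -> measurable_fun (setT : set T') (fun t : T' => X j t).
  move=> ji _ B mB; apply: sub_sigma_algebra.
  exists (fun k => if k == j then B else setT); split.
  - by move=> k; case: ifP.
  - by rewrite eq_sym (negbTE ji).
  - apply/seteqP; split => t /=.
    + move=> [_ Bt] k _; case: eqP => [->//|_]; done.
    + by move=> h; split => //; have := h j I; rewrite eqxx.
have mf : measurable_fun (setT : set T')
    (fun t : T' => C - D * \sum_(j < n) a j * (X j t - b j)).
  apply: measurable_funB; first exact: measurable_cst.
  apply: measurable_funM; first exact: measurable_cst.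
  apply: measurable_sum => j.
  have [->|ji] := eqVneq j i.
    rewrite ai0 (_ : (fun x : T' => 0 * (X i x - b i)) = cst 0).
      exact: measurable_cst.
    by apply/funext => x; rewrite mul0r.
  apply: measurable_funM; first exact: measurable_cst.
  apply: measurable_funB; [exact: mXj|exact: measurable_cst].
have := mf measurableT _ (measurable_itv `]0, +oo[%R).
rewrite setTI; congr (<<s _ >> _); apply/seteqP; split => t /=;
  by rewrite in_itv /= andbT.
Qed.

Hypothesis hY : forall t, Y t = 1 \/ Y t = -1.
Hypothesis hsq : forall i, P.-integrable setT (fun t => ((X i t) ^+ 2)%:E).

Lemma intX j : P.-integrable setT (fun t => (X j t)%:E).
Proof.
apply: (le_integrable measurableT _ _ (integrableD measurableT
   (finite_measure_integrable_cst P 1 measurableT) (hsq j))).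
- exact/measurable_EFinP.
- move=> t _ /=; have h2 : 0 <= 1 + X j t ^+ 2 by rewrite addr_ge0 ?sqr_ge0.
  rewrite lee_fin (ger0_norm h2).
  rewrite -(real_normK (num_real (X j t))).
  have := normr_ge0 (X j t); set y := `|X j t| => y0.
  have := sqr_ge0 (y - 1); nra.
Qed.

Lemma int_bound (f : T -> R) (C : R) (K : 'I_n -> R) :
  measurable_fun setT f ->
  (forall t, `|f t| <= C + \sum_(j < n) K j * `|X j t|) ->
  P.-integrable setT (fun t => (f t)%:E).
Proof.
move=> mf hb.
pose g t := ((C + \sum_(j < n) K j * `|X j t|))%:E.
have eg : g = fun t => ((cst C t)%:E + (\sum_(j < n) (K j)%:E * `|(X j t)%:E|))%E.
  apply/funext => t; rewrite /g EFinD; congr (_ + _)%E.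
  by rewrite -sumEFin; apply: eq_bigr => j _; rewrite EFinM abse_EFin.
have ig : P.-integrable setT g.
  rewrite eg; apply: (integrableD measurableT).
    exact: (finite_measure_integrable_cst P C measurableT).
  apply: (integrable_sum measurableT) => j _; apply: (integrableZl measurableT).
  exact: integrable_abse (intX j).
apply: (le_integrable measurableT _ _ ig).
- exact/measurable_EFinP.
- move=> t _; rewrite /g !abse_EFin lee_fin; apply: (le_trans (hb t)).
  exact: ler_norm.
Qed.


Definition Lz (u z : 'rV[R]_n) (eps : R) (t : T) : R :=
  1 - Y t * \sum_(j < n) z 0 j * (X j t - Y t * eps * Num.sg (u 0 j)).

Lemma Lform u z eps t :
  1 - Y t * dotv z (xvec X t + AT_delta eps u (xvec X t) (Y t)) = Lz u z eps t.
Proof.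
rewrite /dotv /xvec /AT_delta /signv /Lz; congr (_ - _ * _).
by apply: eq_bigr => j _; rewrite !mxE; ring.
Qed.

Lemma mLz u z eps : measurable_fun setT (Lz u z eps).
Proof.
rewrite /Lz; apply: measurable_funB; first exact: measurable_cst.
apply: measurable_funM => //; apply: measurable_sum => j.
apply: measurable_funM; first exact: measurable_cst.
apply: measurable_funB => //.
apply: measurable_funM; last exact: measurable_cst.
by apply: measurable_funM => //; exact: measurable_cst.
Qed.

Lemma normY t : `|Y t| = 1.
Proof. by case: (hY t) => ->; rewrite ?normrN normr1. Qed.

Lemma Lz_bound u z eps t : 0 <= eps ->
  `|Lz u z eps t| <= (1 + eps * \sum_(j < n) `|z 0 j|) + \sum_(j < n) `|z 0 j| * `|X j t|.
Proof.
move=> e0; rewrite /Lz.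
apply: (le_trans (ler_normB _ _)); rewrite normr1 normrM normY mul1r -addrA lerD2l.
apply: (le_trans (ler_norm_sum _ _ _)).
rewrite mulr_sumr -big_split /=; apply: ler_sum => j _.
rewrite normrM (mulrC eps) -mulrDr; apply: ler_wpM2l => //.
apply: (le_trans (ler_normB _ _)); rewrite addrC lerD2r !normrM normY mul1r ger0_norm//.
rewrite -[X in _ <= X]mulr1; apply: ler_wpM2l => //.
by rewrite normr_sg; case: (_ == 0).
Qed.

Lemma hinge_bound u z eps t : 0 <= eps ->
  `|hinge (Lz u z eps t)| <= (1 + eps * \sum_(j < n) `|z 0 j|) + \sum_(j < n) `|z 0 j| * `|X j t|.
Proof.
move=> e0; apply: (le_trans _ (Lz_bound u z eps t e0)).
rewrite /hinge; case: (lerP 0 (Lz u z eps t)) => h.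
  by [].
by rewrite normr0.
Qed.

Lemma int_hinge u z eps : 0 <= eps ->
  P.-integrable setT (fun t => (hinge (Lz u z eps t))%:E).
Proof.
move=> e0; apply: int_bound; last by move=> t; exact: hinge_bound.
rewrite /hinge; apply: measurable_maxr; [exact: measurable_cst|exact: mLz].
Qed.


Variable mu : 'I_n -> R.
Hypothesis hA1 : forall i (c : R), (c = 1 \/ c = -1) ->
  (\int[P]_(t in Yeq Y c) (X i t)%:E = ((c * mu i)%:E * P (Yeq Y c)))%E.

Lemma hinge_lin (x y : R) : hinge x + (if 0 < x then y else 0) <= hinge (x + y).
Proof.
rewrite /hinge; case: ifP => hx.
  by rewrite (max_r (ltW hx)) le_max lexx orbT.
have hx' : x <= 0 by rewrite leNgt hx.
by rewrite (max_l hx') addr0 le_max lexx.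
Qed.

Lemma eU lam eps u z : U P X Y lam (AT_delta eps u) z =
  (\int[P]_t (hinge (Lz u z eps t))%:E + (lam / 2 * \sum_(j < n) z 0 j ^+ 2)%:E)%E.
Proof.
rewrite /U; congr (_ + _)%E; apply: eq_integral => t _.
by rewrite Lform.
Qed.

Lemma core (lam eps : R) (u v : 'rV[R]_n) i :
  0 < lam -> 0 < eps -> `|mu i| <= eps -> u 0 i != 0 ->
  (forall z, (U P X Y lam (AT_delta eps u) v <= U P X Y lam (AT_delta eps u) z)%E) ->
  Num.sg (u 0 i) * v 0 i <= 0.
Proof.
move=> lam0 eps0 hmu ui0 hmin.
set s := Num.sg (u 0 i).
have hs : s = 1 \/ s = -1.
  rewrite /s; case: (ltrgtP (u 0 i) 0) => h.
  - by right; rewrite ltr0_sg.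
  - by left; rewrite gtr0_sg.
  - by move: ui0; rewrite h eqxx.
rewrite leNgt; apply/negP => hpos.
set a := s * v 0 i in hpos.
pose v' : 'rV[R]_n := \row_j (if j == i then 0 else v 0 j).
have v'i : v' 0 i = 0 by rewrite mxE eqxx.
have v'j j : j != i -> v' 0 j = v 0 j by move=> /negbTE h; rewrite mxE h.
pose Z t := eps - s * Y t * X i t.
have hL t : Lz u v eps t = Lz u v' eps t + a * Z t.
  rewrite /Lz (bigD1 i)//= [in RHS](bigD1 i)//= v'i.
  have -> : \sum_(j < n | j != i) v 0 j * (X j t - Y t * eps * Num.sg (u 0 j)) =
            \sum_(j < n | j != i) v' 0 j * (X j t - Y t * eps * Num.sg (u 0 j)).
    by apply: eq_bigr => j ji; rewrite v'j.
  rewrite /Z /a -/s; case: (hY t) => ->; case: hs => ->; ring.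
pose A' := [set t | 0 < Lz u v' eps t].
have mA' : measurable A'.
  have := mLz u v' eps measurableT _ (measurable_itv `]0, +oo[%R).
  rewrite setTI; congr measurable; apply/seteqP; split => t /=;
    by rewrite in_itv /= andbT.
have mZ : measurable_fun setT Z.
  apply: measurable_funB; first exact: measurable_cst.
  apply: measurable_funM => //; apply: measurable_funM => //.
have iZ : P.-integrable setT (fun t => (Z t)%:E).
  apply: (int_bound _ eps (fun j => if j == i then 1 else 0)) => // t.
  rewrite (bigD1 i)//= eqxx mul1r big1 ?addr0; last first.
    by move=> j /negbTE ->; rewrite mul0r.
  apply: (le_trans (ler_normB _ _)); rewrite (ger0_norm (ltW eps0)) lerD2l.
  rewrite !normrM normY mulr1.
  by case: hs => ->; rewrite ?normrN normr1 mul1r.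
pose F := (fun t => (Z t)%:E) \_ A'.
have iF : P.-integrable setT F.
  by apply/(integrable_mkcond _ mA'); exact: (integrableS measurableT mA' (subsetT _) iZ).
have ihv := int_hinge u v eps (ltW eps0).
have ihv' := int_hinge u v' eps (ltW eps0).
have ineq : (\int[P]_t ((hinge (Lz u v' eps t))%:E + a%:E * F t) <=
             \int[P]_t (hinge (Lz u v eps t))%:E)%E.
  apply: le_integral => //.
    by apply: (integrableD measurableT) => //; exact: (integrableZl measurableT).
  move=> t _; rewrite hL /F patchE.
  have := hinge_lin (Lz u v' eps t) (a * Z t).
  case: ifPn => ht; case: ifPn => ht'.
  - by rewrite -EFinM -EFinD lee_fin.
  - by move=> _; exfalso; move: ht'; rewrite notin_setE => /(_ ht).
  - by move=> _; exfalso; move: ht'; rewrite in_setE /A' /= => h; rewrite h in ht.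
  - by rewrite mule0 adde0 addr0 lee_fin.
have {}ineq : (\int[P]_t (hinge (Lz u v' eps t))%:E + a%:E * \int[P]_t F t <=
    \int[P]_t (hinge (Lz u v eps t))%:E)%E.
  rewrite -(integralZl measurableT iF) -(integralD measurableT)//.
  exact: (integrableZl measurableT).
have Kpos : (0 <= \int[P]_(t in A') (Z t)%:E)%E.
  have eA : A' = (Yeq Y 1 `&` A') `|` (Yeq Y (-1) `&` A').
    apply/seteqP; split => t /=.
    - by move=> ht; case: (hY t) => h; [left|right].
    - by move=> [] [].
  have Kc c : (c = 1 \/ c = -1) -> (0 <= \int[P]_(t in Yeq Y c `&` A') (Z t)%:E)%E.
    move=> hc.
    pose Ac := [set t | 0 < 1 - c * \sum_(j < n) v' 0 j * (X j t - c * eps * Num.sg (u 0 j))].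
    have sAc : <<s G0 i >> Ac.
      exact: (sigma_lin i (fun j => v' 0 j) (fun j => c * eps * Num.sg (u 0 j)) 1 c v'i).
    have [mAc _] := Phi_sigma c i setT Ac hc measurableT sAc.
    have eAc : Yeq Y c `&` A' = Yeq Y c `&` Ac.
      apply/seteqP; split => t /= [Yt ht]; split => //.
      + by move: ht; rewrite /A' /Lz /= Yt.
      + by move: ht; rewrite /A' /Lz /= Yt.
    rewrite eAc.
    have mYA := mYI c Ac mAc.
    have iXS : P.-integrable (Yeq Y c `&` Ac) (fun t => (X i t)%:E).
      exact: (integrableS measurableT mYA (subsetT _) (intX i)).
    rewrite (eq_integral (fun t => (eps%:E - (s * c)%:E * (X i t)%:E)%E)); last first.
      by move=> t; rewrite inE => -[Yt _]; rewrite /Z Yt -EFinM -EFinB.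
    rewrite (integralB mYA); last 2 first.
    - exact: (finite_measure_integrable_cst P eps mYA).
    - exact: (integrableZl mYA).
    rewrite (integralZl mYA)// (int_X c i Ac (c * mu i) hc (intX i) (hA1 i c hc) sAc).
    have ec := integral_cst P mYA eps%:E; rewrite /cst in ec.
    rewrite ec muleA -EFinM -muleBl; last 2 first.
    - exact: fin_num_measure.
    - exact: fin_num_adde_defl.
    rewrite -EFinB; apply: mule_ge0; last exact: measure_ge0.
    rewrite lee_fin.
    have -> : s * c * (c * mu i) = s * mu i * (c * c) by ring.
    have -> : c * c = 1 by case: hc => ->; ring.
    rewrite mulr1 subr_ge0; apply: le_trans hmu.
    by case: hs => ->; rewrite ?mul1r ?mulN1r ?normrN; [exact: ler_norm|rewrite -normrN; exact: ler_norm].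
  rewrite eA integral_setU; last 4 first.
  - exact: mYI.
  - exact: mYI.
  - by apply: measurable_funTS; exact/measurable_EFinP.
  - rewrite disj_set2E; apply/eqP/seteqP; split => t //= [[h1 _] [h2 _]].
    by move: h1 h2; rewrite /Yeq /= => -> h; lra.
  by apply: adde_ge0; apply: Kc; [left|right].
have eK : (\int[P]_t F t = \int[P]_(t in A') (Z t)%:E)%E.
  by rewrite /F -integral_mkcondr setTI.
rewrite eK in ineq.
have hm := hmin v'; rewrite !eU in hm.
have f1 := integrable_fin_num measurableT ihv.
have f2 := integrable_fin_num measurableT ihv'.
have f3 := integrable_fin_num mA' (integrableS measurableT mA' (subsetT _) iZ).
move: ineq hm Kpos.
rewrite -(fineK f1) -(fineK f2) -(fineK f3) -!EFinM -!EFinD !lee_fin.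
set I1 := fine _; set I2 := fine _; set K := fine _.
move=> h1 h2 h3.
have eR : \sum_(j < n) v 0 j ^+ 2 = v 0 i ^+ 2 + \sum_(j < n) v' 0 j ^+ 2.
  rewrite (bigD1 i)//= [in RHS](bigD1 i)//= v'i expr0n /= add0r; congr (_ + _).
  by apply: eq_bigr => j ji; rewrite v'j.
rewrite eR in h2.
have vi0 : 0 < v 0 i ^+ 2.
  rewrite exprn_even_gt0 //=; apply/eqP => h.
  by move: hpos; rewrite /a h mulr0 ltxx.
have : 0 < lam / 2 * v 0 i ^+ 2 by rewrite mulr_gt0// divr_gt0.
have : 0 <= a * I2 by apply: mulr_ge0 => //; exact: ltW.
set S' := \sum_(j < n) _ in h2.
nra.
Qed.

End Part1.

Theorem mainTheorem8 (R : realType) (d : measure_display) (T : measurableType d)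
  (P : probability T R) (n : nat) (X : 'I_n -> T -> R) (Y : T -> R)
  (mu : 'I_n -> R) (lam eps : R) (w : nat -> 'rV[R]_n) :
  SLAR P X Y mu -> 0 < lam -> 0 < eps ->
  is_AT_sequence P X Y lam eps w ->
  forall i : 'I_n, `|mu i| <= eps ->
  forall t : nat, (0 < t)%N ->
    (0 < w t 0 i -> w t.+1 0 i <= 0) /\ (w t 0 i < 0 -> 0 <= w t.+1 0 i).
Proof.
move=> [[mX mY] hY hsq hA1 hind] lam0 eps0 hAT i hmu t _.
have hmin : forall z, (U P X Y lam (AT_delta eps (w t)) (w t.+1) <=
                       U P X Y lam (AT_delta eps (w t)) z)%E.
  by move=> z; exact: (hAT t.+1 (ltn0Sn t) z).
have hc := fun h => core P n X Y mX mY hind hY hsq mu hA1 lam eps (w t) (w t.+1) i lam0 eps0 hmu h hmin.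
split => hw.
- by have := hc (lt0r_neq0 hw); rewrite gtr0_sg // mul1r.
- by have := hc (ltr0_neq0 hw); rewrite ltr0_sg // mulN1r oppr_le0.
Qed.
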